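(* Let $\hat x\in\mathbb{R}^{n_1}$ and let (P$'$), (S1$'$), (S2), (S2$'$) be as defined in the context, and assume $d=c_y$ and that (S1$'$) and (S2$'$) are feasible. Then (P$'$) can be solved by solving (S1$'$) and (S2$'$) independently, as follows. Let $\mathfrak O$ be the optimal value of (S1$'$) if finite and $\mathfrak O=+\infty$ otherwise. Then: (S2) is unbounded if either (S2$'$) is unbounded (with an unbounded ray $(\tilde\psi,\tilde u_y)$, in which case $(\tilde\psi,\tilde u_y,0)$ is an unbounded ray of (S2)) or (S2$'$) has a finite optimum $\mathfrak O_2$ at $(\hat\psi,\hat u_y)$ with $\mathfrak O_2>\mathfrak O$ (in which case $(\hat\psi,\hat u_y,1)$ is an unbounded ray of (S2)); and if (S2$'$) has a finite optimum $\mathfrak O_2\le\mathfrak O$ at $(\hat\psi,\hat u_y)$, then $(\hat\psi,\hat u_y,0)$ is optimal for (S2) with value $\mathfrak O_2$. Consequently (P$'$) is unbounded if and only if (S1$'$) is unbounded, or (S2$'$) is unbounded, or the optimal value of (S2$'$) exceeds $\mathfrak O$; otherwise the optimal value of (P$'$) equals the optimal value of (S2$'$), attained at $(\psi,u_y,w,y,u_\psi,v)=(\hat\psi,\hat u_y,0,0,0,0)$.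
   Context: Data: $A\in\mathbb{R}^{m\times n_1}$, $B\in\mathbb{R}^{m\times n_2}$, $b\in\mathbb{R}^m$, $c_y,d\in\mathbb{R}^{n_2}$, $G_{xy}\in\mathbb{R}^{p\times n_1}$, $G_y\in\mathbb{R}^{p\times n_2}$, $h_y\in\mathbb{R}^p$, $G_{x\psi}\in\mathbb{R}^{\ell\times n_1}$, $G_\psi\in\mathbb{R}^{\ell\times m}$, $h_\psi\in\mathbb{R}^\ell$, $K_\psi\in\mathbb{R}^{q\times m}$, $K_s\in\mathbb{R}^{q\times r}$, $K_x\in\mathbb{R}^{q\times n_1}$, $k\in\mathbb{R}^q$ (the $K$'s, $k$ come from a McCormick linearization in a strong-duality reformulation of a bilevel program with lower level $\min_{y\ge0}\{d^Ty:Ax+By\ge b\}$, whose upper level additionally imposes $G_{x\psi}x+G_\psi\psi\ge h_\psi$ on the lower-level dual $\psi$). $\mathbf 1$ is the all-ones vector. (P$'$) (Benders subproblem, dual of $\min c_y^Ty$ s.t. $G_yy\ge h_y-G_{xy}\hat x$, $By\ge b-A\hat x$, $-B^T\psi\ge-d$, $-d^Ty+\psi^Tb-s^T\mathbf 1\ge 0$, $K_\psi\psi+K_ss\ge k+K_x\hat x$, $G_\psi\psi\ge h_\psi-G_{x\psi}\hat x$, $y,\psi,s\ge0$): maximize $\psi^T(b-A\hat x)+u_y^T(h_y-G_{xy}\hat x)+u_\psi^T(h_\psi-G_{x\psi}\hat x)-[d^Ty-v^T(k+K_x\hat x)]$ subject to $By-G_\psi^Tu_\psi-K_\psi^Tv\ge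 bw$, $B^T\psi+G_y^Tu_y\le dw+c_y$, $K_s^Tv\le\mathbf 1 w$, $\psi,u_y,u_\psi,w,y,v\ge0$. (S1$'$): minimize $d^Ty-u_\psi^T(h_\psi-G_{x\psi}\hat x)-v^T(k+K_x\hat x)$ subject to $By-G_\psi^Tu_\psi-K_\psi^Tv\ge b$, $K_s^Tv\le\mathbf 1$, $y,u_\psi,v\ge0$. (S2): maximize $\psi^T(b-A\hat x)+u_y^T(h_y-G_{xy}\hat x)-\mathfrak O w$ subject to $B^T\psi+G_y^Tu_y\le dw+c_y$, $\psi,u_y,w\ge0$ (with $w$ fixed at $0$ if $\mathfrak O=+\infty$). (S2$'$): (S2) with $w$ fixed at $0$, i.e., maximize $\psi^T(b-A\hat x)+u_y^T(h_y-G_{xy}\hat x)$ s.t. $B^T\psi+G_y^Tu_y\le c_y$, $\psi,u_y\ge0$. *)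

(* Defs.v *)
From mathcomp Require Import all_boot all_order all_algebra.
Set Implicit Arguments. Unset Strict Implicit. Unset Printing Implicit Defensive.
Import Order.TTheory GRing.Theory Num.Theory.
Local Open Scope ring_scope.

Section Defs.
Variable R : realFieldType.

Definition dotv (k : nat) (u v : 'cV[R]_k) : R := \sum_(i < k) u i 0 * v i 0.

Definition lev (k : nat) (u v : 'cV[R]_k) : Prop := forall i, u i 0 <= v i 0.
Definition nonneg (k : nat) (u : 'cV[R]_k) : Prop := lev 0 u.

Definition ones (k : nat) : 'cV[R]_k := const_mx 1.

Definition optimal_max (X : Type) (F : X -> Prop) (f : X -> R) (x : X) : Prop :=
  F x /\ forall x', F x' -> f x' <= f x.
Definition optimal_min (X : Type) (F : X -> Prop) (f : X -> R) (x : X) : Prop :=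
  F x /\ forall x', F x' -> f x <= f x'.
Definition unbounded_max (X : Type) (F : X -> Prop) (f : X -> R) : Prop :=
  forall M : R, exists x, F x /\ M < f x.
Definition unbounded_min (X : Type) (F : X -> Prop) (f : X -> R) : Prop :=
  forall M : R, exists x, F x /\ f x < M.
Definition feasible (X : Type) (F : X -> Prop) : Prop := exists x, F x.
Definition opt_value_min (X : Type) (F : X -> Prop) (f : X -> R) (o : R) : Prop :=
  exists x, optimal_min F f x /\ f x = o.
Definition opt_value_max (X : Type) (F : X -> Prop) (f : X -> R) (o : R) : Prop :=
  exists x, optimal_max F f x /\ f x = o.

(** Extended value O in R ∪ {+oo}, encoded as [option R] with [None] = +oo. *)
Definition ext_gt (a : R) (O : option R) : Prop :=
  match O with Some o => o < a | None => False end.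

Record LPdata (m n1 n2 p l q r : nat) := {
  A : 'M[R]_(m, n1); B : 'M[R]_(m, n2); b : 'cV[R]_m;
  cy : 'cV[R]_n2; d : 'cV[R]_n2;
  Gxy : 'M[R]_(p, n1); Gy : 'M[R]_(p, n2); hy : 'cV[R]_p;
  Gxpsi : 'M[R]_(l, n1); Gpsi : 'M[R]_(l, m); hpsi : 'cV[R]_l;
  Kpsi : 'M[R]_(q, m); Ks : 'M[R]_(q, r); Kx : 'M[R]_(q, n1); k : 'cV[R]_q }.

Variables (m n1 n2 p l q r : nat) (D : LPdata m n1 n2 p l q r) (xh : 'cV[R]_n1).

Definition Pvar := ('cV[R]_m * 'cV[R]_p * R * 'cV[R]_n2 * 'cV[R]_l * 'cV[R]_q)%type.

Definition P_feas (z : Pvar) : Prop :=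
  let: (psi, uy, w, y, upsi, v) := z in
  [/\ nonneg psi, nonneg uy, 0 <= w, nonneg y & nonneg upsi /\ nonneg v] /\
  [/\ lev (w *: b D) (B D *m y - (Gpsi D)^T *m upsi - (Kpsi D)^T *m v),
      lev ((B D)^T *m psi + (Gy D)^T *m uy) (w *: d D + cy D)
    & lev ((Ks D)^T *m v) (w *: ones r)].

Definition P_obj (z : Pvar) : R :=
  let: (psi, uy, w, y, upsi, v) := z in
  dotv psi (b D - A D *m xh) + dotv uy (hy D - Gxy D *m xh)
  + dotv upsi (hpsi D - Gxpsi D *m xh)
  - (dotv (d D) y - dotv v (k D + Kx D *m xh)).

Definition S1var := ('cV[R]_n2 * 'cV[R]_l * 'cV[R]_q)%type.

Definition S1_feas (z : S1var) : Prop :=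
  let: (y, upsi, v) := z in
  [/\ nonneg y, nonneg upsi, nonneg v,
      lev (b D) (B D *m y - (Gpsi D)^T *m upsi - (Kpsi D)^T *m v)
    & lev ((Ks D)^T *m v) (ones r)].

Definition S1_obj (z : S1var) : R :=
  let: (y, upsi, v) := z in
  dotv (d D) y - dotv upsi (hpsi D - Gxpsi D *m xh) - dotv v (k D + Kx D *m xh).

Definition S2var := ('cV[R]_m * 'cV[R]_p * R)%type.

Definition S2_feas (O : option R) (z : S2var) : Prop :=
  let: (psi, uy, w) := z in
  [/\ nonneg psi, nonneg uy, 0 <= w, (O = None -> w = 0)
    & lev ((B D)^T *m psi + (Gy D)^T *m uy) (w *: d D + cy D)].

Definition S2_obj (O : option R) (z : S2var) : R :=
  let: (psi, uy, w) := z in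
  dotv psi (b D - A D *m xh) + dotv uy (hy D - Gxy D *m xh)
  - (if O is Some o then o * w else 0).

(** Unbounded ray of (S2): a recession direction of its feasible set along
    which the (linear) objective strictly increases. *)
Definition S2_ray (O : option R) (z : S2var) : Prop :=
  let: (psi, uy, w) := z in
  [/\ nonneg psi, nonneg uy, 0 <= w, (O = None -> w = 0)
    & lev ((B D)^T *m psi + (Gy D)^T *m uy) (w *: d D)] /\ 0 < S2_obj O z.

Definition S2'var := ('cV[R]_m * 'cV[R]_p)%type.

Definition S2'_feas (z : S2'var) : Prop :=
  let: (psi, uy) := z in
  [/\ nonneg psi, nonneg uy & lev ((B D)^T *m psi + (Gy D)^T *m uy) (cy D)].

Definition S2'_obj (z : S2'var) : R :=
  let: (psi, uy) := z in
  dotv psi (b D - A D *m xh) + dotv uy (hy D - Gxy D *m xh).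

Definition S2'_ray (z : S2'var) : Prop :=
  let: (psi, uy) := z in
  [/\ nonneg psi, nonneg uy, lev ((B D)^T *m psi + (Gy D)^T *m uy) 0
    & 0 < S2'_obj z].

End Defs.

(* Main.v *)
Require Import Defs.
From mathcomp Require Import all_boot all_order all_algebra.
From mathcomp Require Import ring lra.
From Stdlib Require Import Classical PropExtensionality.
Set Implicit Arguments. Unset Strict Implicit. Unset Printing Implicit Defensive.
Import Order.TTheory GRing.Theory Num.Theory.
Local Open Scope ring_scope.

Section FM.
Variable R : realFieldType.

Definition dotn (N : nat) (a : seq R) (x : nat -> R) : R :=
  \sum_(i < N) a`_i * x i.
Definition cstr := (seq R * R)%type.
Definition satc N (x : nat -> R) (c : cstr) : bool := dotn N c.1 x <= c.2.
Definition sat N (S : seq cstr) x := all (satc N x) S.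

Lemma dotn_ext N a x y : (forall i, (i < N)%N -> x i = y i) ->
  dotn N a x = dotn N a y.
Proof. by move=> h; apply: eq_bigr => i _; rewrite h. Qed.

Lemma sat_ext N S x y : (forall i, (i < N)%N -> x i = y i) ->
  sat N S x = sat N S y.
Proof. by move=> h; apply: eq_all => c; rewrite /satc (dotn_ext _ h). Qed.

Lemma dotnS N a x : dotn N.+1 a x = dotn N a x + a`_N * x N.
Proof. by rewrite /dotn big_ord_recr. Qed.

Definition upd (x : nat -> R) N t := fun j => if j == N then t else x j.

Definition comb N (p q : cstr) : cstr :=
  (mkseq (fun j => (- q.1`_N) * p.1`_j + p.1`_N * q.1`_j) N,
   (- q.1`_N) * p.2 + p.1`_N * q.2).

Definition elim N (S : seq cstr) : seq cstr :=
  [seq c <- S | c.1`_N == 0] ++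
  [seq comb N p q | p <- [seq c <- S | 0 < c.1`_N], q <- [seq c <- S | c.1`_N < 0]].

Lemma dotn_comb N p q x :
  dotn N (comb N p q).1 x = (- q.1`_N) * dotn N p.1 x + p.1`_N * dotn N q.1 x.
Proof.
rewrite /dotn /= !mulr_sumr -big_split /=; apply: eq_bigr => i _.
by rewrite nth_mkseq // mulrDl !mulrA.
Qed.

Lemma all_allpairs (S T U : Type) (P : pred U) (f : S -> T -> U) s t :
  all P [seq f x y | x <- s, y <- t] = all (fun x => all (fun y => P (f x y)) t) s.
Proof. by elim: s => //= x s IH; rewrite all_cat all_map IH. Qed.

Lemma elim_sound N S x : sat N.+1 S x -> sat N (elim N S) x.
Proof.
move=> hS; rewrite /sat all_cat; apply/andP; split.
  rewrite all_filter; apply: sub_all (hS) => c; rewrite /satc dotnS.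
  by move=> h; apply/implyP => /eqP e; rewrite e mul0r addr0 in h.
rewrite all_allpairs all_filter; apply: sub_all (hS) => p hp; apply/implyP => pp.
rewrite all_filter; apply: sub_all (hS) => q hq; apply/implyP => qq.
rewrite /satc dotn_comb /=.
move: hp hq; rewrite /satc !dotnS => hp hq.
have h1 : 0 <= - q.1`_N by rewrite oppr_ge0 ltW.
have h2 := ltW pp.
have := ler_wpM2l h1 hp; have := ler_wpM2l h2 hq.
set a := q.1`_N; set b := p.1`_N.
move=> e1 e2.
have : (- a) * (dotn N p.1 x + b * x N) + b * (dotn N q.1 x + a * x N) <=
       (- a) * p.2 + b * q.2 by apply: lerD.
suff -> : (- a) * (dotn N p.1 x + b * x N) + b * (dotn N q.1 x + a * x N) =
   (- a) * dotn N p.1 x + b * dotn N q.1 x by [].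
by ring.
Qed.

Lemma between (ls us : seq R) :
  (forall l u, l \in ls -> u \in us -> l <= u) ->
  exists t, (forall l, l \in ls -> l <= t) /\ (forall u, u \in us -> t <= u).
Proof.
elim: ls => [|l ls IH] h.
  elim: us {h} => [|u us IHu]; first by exists 0.
  case: IHu => t [_ ht]; exists (Num.min u t); split => // v.
  rewrite inE => /orP [/eqP ->|hv]; rewrite ge_min ?lexx //.
  by rewrite ht ?orbT.
case: IH => [l' u hl hu|t [h1 h2]]; first by apply: h => //; rewrite inE hl orbT.
exists (Num.max l t); split.
  move=> v; rewrite inE => /orP [/eqP ->|hv]; rewrite le_max ?lexx //.
  by rewrite h1 ?orbT.
move=> u hu; rewrite ge_max h2 // andbT; apply: h => //; by rewrite inE eqxx.
Qed.

Lemma dotn_upd N a x t : dotn N.+1 a (upd x N t) = dotn N a x + a`_N * t.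
Proof.
rewrite dotnS /upd eqxx; congr (_ + _); apply: dotn_ext => i hi.
by rewrite ifF // ltn_eqF.
Qed.

Lemma elim_complete N S x : sat N (elim N S) x -> exists t, sat N.+1 S (upd x N t).
Proof.
rewrite /sat all_cat all_allpairs => /andP [hZ hPN].
set Ps := [seq c <- S | 0 < c.1`_N]; set Ns := [seq c <- S | c.1`_N < 0].
pose ls := [seq (q.2 - dotn N q.1 x) / q.1`_N | q <- Ns].
pose us := [seq (p.2 - dotn N p.1 x) / p.1`_N | p <- Ps].
have [t [ht1 ht2]] : exists t, (forall l, l \in ls -> l <= t) /\ (forall u, u \in us -> t <= u).
  apply: between => l u /mapP [q hq ->] /mapP [p hp ->].
  move: (hq) (hp); rewrite !mem_filter => /andP [qn _] /andP [pp _].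
  have := allP hPN p hp => /allP /(_ q hq); rewrite /satc dotn_comb /= => hc.
  rewrite ler_pdivlMr // mulrAC ler_ndivrMr //.
  set a := q.1`_N in qn hc *; set b := p.1`_N in pp hc *.
  set dp := dotn N p.1 x in hc *; set dq := dotn N q.1 x in hc *.
  nra.
exists t; apply/allP => c hc; rewrite /satc dotn_upd.
case: (ltrgtP (c.1`_N) 0) => ha.
- have := ht1 ((c.2 - dotn N c.1 x) / c.1`_N).
  rewrite ler_ndivrMr // => h; have := h (map_f _ _).
  rewrite mem_filter ha hc => /(_ isT) ?; lra.
- have := ht2 ((c.2 - dotn N c.1 x) / c.1`_N).
  rewrite ler_pdivlMr // => h; have := h (map_f _ _).
  rewrite mem_filter ha hc => /(_ isT) ?; lra.
- rewrite ha mul0r addr0; have := allP hZ c; rewrite mem_filter ha eqxx hc.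
  by move=> /(_ isT).
Qed.


Lemma proj d N S : exists S', forall x, sat N S' x <->
  exists y, (forall j, (j < N)%N -> y j = x j) /\ sat (N + d) S y.
Proof.
elim: d S => [|d IH] S.
  exists S => x; rewrite addn0; split; first by move=> h; exists x.
  by case=> y [hy h]; rewrite -(sat_ext _ hy).
have [S' HS'] := IH (elim (N + d) S); exists S' => x; rewrite HS'; split.
  case=> y [hy /elim_complete [t ht]]; exists (upd y (N + d) t); split.
    by move=> j hj; rewrite /upd ifF ?hy //; apply/negbTE; rewrite neq_ltn (leq_trans hj) ?leq_addr.
  by rewrite addnS.
case=> y [hy h]; exists y; split => //; apply: elim_sound; by rewrite -addnS.
Qed.

Lemma dotn1 a t : dotn 1 a (fun _ => t) = a`_0 * t.
Proof. by rewrite /dotn big_ord1. Qed.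

Lemma seqmax (s : seq R) x0 : x0 \in s ->
  exists2 m, m \in s & forall l, l \in s -> l <= m.
Proof.
elim: s x0 => // a s IH x0 _; case: s IH => [|b s] IH.
  by exists a => [|l]; rewrite ?inE ?eqxx // => /eqP ->.
have [m hm hmax] := IH b (mem_head _ _).
exists (Num.max a m); first by case: (leP a m) => _; rewrite inE ?hm ?orbT ?eqxx.
move=> l; rewrite inE => /orP [/eqP ->|hl]; rewrite le_max ?lexx //.
by rewrite hmax ?orbT.
Qed.

Lemma oned (S : seq cstr) t0 M : sat 1 S (fun _ => t0) ->
  (forall t, sat 1 S (fun _ => t) -> M <= t) ->
  exists ts, sat 1 S (fun _ => ts) /\ forall t, sat 1 S (fun _ => t) -> ts <= t.
Proof.
move=> h0 hM.
pose ls := [seq c.2 / c.1`_0 | c <- S & c.1`_0 < 0].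
case E: ls => [|l0 ls'].
  pose t := Num.min t0 (M - 1).
  have : sat 1 S (fun _ => t).
    apply/allP => c hc; rewrite /satc dotn1.
    case: (ltP (c.1`_0) 0) => ha.
      have : c.2 / c.1`_0 \in ls by apply: map_f; rewrite mem_filter ha.
      by rewrite E.
    have := allP h0 c hc; rewrite /satc dotn1 => h.
    apply: le_trans h; apply: ler_wpM2l => //; by rewrite ge_min lexx.
  move=> /hM; rewrite le_min => /andP [_]; lra.
have [m hm hmax] := seqmax (mem_head l0 ls'); rewrite -E in hm hmax.
move: hm => /mapP [cs]; rewrite mem_filter => /andP [hcs csin] mE.
have key : forall t, sat 1 S (fun _ => t) -> m <= t.
  move=> t ht; have := allP ht cs csin; rewrite /satc dotn1 mE ler_ndivrMr //.
  by rewrite mulrC.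
exists m; split => //; apply/allP => c hc; rewrite /satc dotn1.
case: (ltP (c.1`_0) 0) => ha.
  have hl : c.2 / c.1`_0 \in ls by apply: map_f; rewrite mem_filter ha.
  by have := hmax _ hl; rewrite ler_ndivrMr // mulrC.
have := allP h0 c hc; rewrite /satc dotn1 => h.
apply: le_trans h; apply: ler_wpM2l => //; exact: key.
Qed.

Definition zx (t : R) (x : nat -> R) := fun j => if j is j'.+1 then x j' else t.

Lemma dotn_zx N a0 a t x : dotn N.+1 (a0 :: a) (zx t x) = a0 * t + dotn N a x.
Proof. by rewrite /dotn big_ord_recl. Qed.

Lemma dotn_opp N c x : dotn N (mkseq (fun j => - c`_j) N) x = - dotn N c x.
Proof.
rewrite /dotn -sumrN; apply: eq_bigr => i _; by rewrite nth_mkseq // mulNr.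
Qed.

Theorem lp_core N (S : seq cstr) (c : seq R) :
  (exists x0, sat N S x0) -> (exists M, forall x, sat N S x -> M <= dotn N c x) ->
  exists xs, sat N S xs /\ forall x, sat N S x -> dotn N c xs <= dotn N c x.
Proof.
move=> [x0 hx0] [M hM].
pose T := [seq (0 :: c0.1, c0.2) | c0 <- S] ++
          [:: (-1 :: c, 0); (1 :: mkseq (fun j => - c`_j) N, 0)].
have HT : forall t x, sat N.+1 T (zx t x) <-> sat N S x /\ t = dotn N c x.
  move=> t x; rewrite /sat all_cat all_map /= /satc /=.
  rewrite (eq_all (a2 := fun c0 : cstr => dotn N c0.1 x <= c0.2)); last first.
    by move=> c0 /=; rewrite dotn_zx mul0r add0r.
  rewrite !dotn_zx dotn_opp.
  split.
    move=> /andP [-> /and3P [h1 h2 _]]; split => //; lra.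
  by move=> [h ->]; rewrite h /= andbT mulN1r mul1r addNr subrr lexx.
have [S' HS'] := proj N 1 T.
have zxE : forall y, sat N.+1 T y = sat N.+1 T (zx (y 0) (fun j => y j.+1)).
  by move=> y; apply: sat_ext => -[|j].
have [ts [hts hmin]] : exists ts, sat 1 S' (fun _ => ts) /\
   forall t, sat 1 S' (fun _ => t) -> ts <= t.
  apply: (@oned _ (dotn N c x0) M).
    apply/HS'; exists (zx (dotn N c x0) x0); split; first by case.
    by rewrite add1n; apply/HT.
  move=> t /HS' [y [hy]]; rewrite add1n zxE => /HT [hs e].
  have := hy 0%N isT => /= <-; rewrite e; exact: hM.
have := hts => /HS' [y [hy]]; rewrite add1n zxE => /HT [hs ht].
exists (fun j => y j.+1); split => // x hx.
rewrite -ht (hy 0%N isT); apply: hmin; apply/HS'.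
exists (zx (dotn N c x) x); split; first by case.
by rewrite add1n; apply/HT.
Qed.

End FM.

Section MX.
Variable R : realFieldType.

Definition f2n N (u : 'I_N -> R) : nat -> R :=
  fun j => if (insub j : option 'I_N) is Some i then u i else 0.

Lemma f2nE N (u : 'I_N -> R) (i : 'I_N) : f2n u i = u i.
Proof. by rewrite /f2n valK. Qed.

Lemma dotn_f2n N (u : 'I_N -> R) z :
  dotn N (mkseq (f2n u) N) z = \sum_(i < N) u i * z (val i).
Proof. by apply: eq_bigr => i _; rewrite nth_mkseq // f2nE. Qed.

Lemma mulmx_dec N K (A : 'M[R]_(K, N)) (z : nat -> R) k :
  (A *m \col_(i < N) z (val i)) k 0 = \sum_(i < N) A k i * z (val i).
Proof. by rewrite mxE; apply: eq_bigr => i _; rewrite mxE. Qed.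

Theorem lp_mx N K (A : 'M[R]_(K, N)) (bb : 'cV[R]_K) (c : 'cV[R]_N) :
  (exists x0, lev (A *m x0) bb) ->
  (exists M, forall x, lev (A *m x) bb -> M <= dotv c x) ->
  exists xs, lev (A *m xs) bb /\ forall x, lev (A *m x) bb -> dotv c xs <= dotv c x.
Proof.
pose S := [seq (mkseq (f2n (fun i => A k i)) N, bb k 0) | k <- enum 'I_K].
pose cc := mkseq (f2n (fun i => c i 0)) N.
pose dec (z : nat -> R) : 'cV[R]_N := \col_i z (val i).
pose enc (x : 'cV[R]_N) := f2n (fun i => x i 0).
have Hs : forall z, sat N S z <-> lev (A *m dec z) bb.
  move=> z; rewrite /sat all_map; split.
    move=> /allP h k; have := h k (mem_enum _ k); rewrite /satc /= dotn_f2n.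
    by rewrite mulmx_dec.
  move=> h; apply/allP => k _; rewrite /satc /= dotn_f2n.
  by have := h k; rewrite mulmx_dec.
have Hc : forall z, dotn N cc z = dotv c (dec z).
  by move=> z; rewrite dotn_f2n /dec; apply: eq_bigr => i _; rewrite mxE.
have decK : forall x, dec (enc x) = x.
  by move=> x; apply/matrixP => i j; rewrite /dec /enc mxE f2nE ord1.
move=> [x0 hx0] [M hM].
have [zs [hzs hmin]] : exists xs, sat N S xs /\ forall x, sat N S x -> dotn N cc xs <= dotn N cc x.
  apply: lp_core.
    by exists (enc x0); apply/Hs; rewrite decK.
  by exists M => z /Hs h; rewrite Hc; apply: hM.
exists (dec zs); split; first by apply/Hs.
move=> x hx; rewrite -Hc -(decK x) -Hc; apply: hmin; apply/Hs; by rewrite decK.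
Qed.

End MX.

Section Gen.
Variable R : realFieldType.

Lemma lev_col k1 k2 (a1 b1 : 'cV[R]_k1) (a2 b2 : 'cV[R]_k2) :
  lev (col_mx a1 a2) (col_mx b1 b2) <-> lev a1 b1 /\ lev a2 b2.
Proof.
split.
  move=> h; split => i; [have := h (lshift k2 i) | have := h (rshift k1 i)];
  by rewrite ?col_mxEu ?col_mxEd.
move=> [h1 h2] i; rewrite -(splitK i); case: (split i) => j /=; by rewrite ?col_mxEu ?col_mxEd.
Qed.

Lemma lev_colE k1 k2 (a1 b1 : 'cV[R]_k1) (a2 b2 : 'cV[R]_k2) :
  lev (col_mx a1 a2) (col_mx b1 b2) = (lev a1 b1 /\ lev a2 b2).
Proof. apply: propositional_extensionality; exact: lev_col. Qed.

Lemma dotv_col k1 k2 (a1 b1 : 'cV[R]_k1) (a2 b2 : 'cV[R]_k2) :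
  dotv (col_mx a1 a2) (col_mx b1 b2) = dotv a1 b1 + dotv a2 b2.
Proof. by rewrite /dotv big_split_ord /=; congr (_ + _); apply: eq_bigr => i _; rewrite ?col_mxEu ?col_mxEd. Qed.

Lemma dotvC k (u v : 'cV[R]_k) : dotv u v = dotv v u.
Proof. by apply: eq_bigr => i _; rewrite mulrC. Qed.
Lemma dotvZr k a (u v : 'cV[R]_k) : dotv u (a *: v) = a * dotv u v.
Proof. by rewrite /dotv mulr_sumr; apply: eq_bigr => i _; rewrite mxE mulrCA. Qed.
Lemma dotvZl k a (u v : 'cV[R]_k) : dotv (a *: u) v = a * dotv u v.
Proof. by rewrite dotvC dotvZr dotvC. Qed.
Lemma dotvDr k (u v w : 'cV[R]_k) : dotv u (v + w) = dotv u v + dotv u w.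
Proof. by rewrite /dotv -big_split; apply: eq_bigr => i _; rewrite mxE mulrDr. Qed.
Lemma dotvNl k (u v : 'cV[R]_k) : dotv (- u) v = - dotv u v.
Proof. by rewrite /dotv -sumrN; apply: eq_bigr => i _; rewrite mxE mulNr. Qed.
Lemma dotv0r k (u : 'cV[R]_k) : dotv u 0 = 0.
Proof. by rewrite /dotv big1 // => i _; rewrite mxE mulr0. Qed.

Lemma bounded_of_not_unb (X : Type) (F : X -> Prop) (f : X -> R) :
  ~ unbounded_min F f -> exists M, forall x, F x -> M <= f x.
Proof.
move=> h; apply: NNPP => h2; apply: h => M.
apply: NNPP => h3; apply: h2; exists M => x Fx.
apply: NNPP => h4; apply: h3; exists x; split => //.
by rewrite ltNge; apply/negP.
Qed.

Lemma lp_gen (X : Type) (F : X -> Prop) (f : X -> R) N K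
   (A : 'M[R]_(K, N)) bb c (enc : X -> 'cV[R]_N) (dec : 'cV[R]_N -> X) :
  (forall x, F x <-> lev (A *m enc x) bb) -> (forall x, f x = dotv c (enc x)) ->
  (forall z, enc (dec z) = z) -> feasible F -> ~ unbounded_min F f ->
  exists x, optimal_min F f x.
Proof.
move=> HF Hf encK [x0 Fx0] /bounded_of_not_unb [M HM].
have [zs [hzs hmin]] := lp_mx (c := c) (ex_intro _ (enc x0) (proj1 (HF x0) Fx0))
  (ex_intro _ M (fun z hz => let h := HM (dec z) (proj2 (HF _) (eq_ind_r (fun w => lev (A *m w) bb) hz (encK z))) in
      eq_ind _ (fun w => M <= w) h _ (eq_trans (Hf _) (f_equal _ (encK z))))).
exists (dec zs); split; first by apply/HF; rewrite encK.
by move=> x /HF hx; rewrite !Hf encK; apply: hmin.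
Qed.

End Gen.

Section Enc.
Variables (R : realFieldType) (m n1 n2 p l q r : nat)
  (D : LPdata R m n1 n2 p l q r) (xh : 'cV[R]_n1).

Lemma levN0 k (y : 'cV[R]_k) : lev (- y) 0 <-> nonneg y.
Proof. by split => h i; have := h i; rewrite !mxE oppr_le0. Qed.
Lemma levN0E k (y : 'cV[R]_k) : lev (- y) 0 = nonneg y.
Proof. apply: propositional_extensionality; exact: levN0. Qed.

Lemma S1_attain : feasible (S1_feas D) -> ~ unbounded_min (S1_feas D) (S1_obj D xh) ->
  exists z, optimal_min (S1_feas D) (S1_obj D xh) z.
Proof.
apply: (@lp_gen _ _ _ _ (n2 + (l + q)) (n2 + (l + (q + (m + r))))
  (col_mx (row_mx (-1%:M) (row_mx 0 0)) (col_mx (row_mx 0 (row_mx (-1%:M) 0))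
    (col_mx (row_mx 0 (row_mx 0 (-1%:M)))
    (col_mx (row_mx (- B D) (row_mx (Gpsi D)^T (Kpsi D)^T)) (row_mx 0 (row_mx 0 (Ks D)^T))))))
  (col_mx 0 (col_mx 0 (col_mx 0 (col_mx (- b D) (ones R r)))))
  (col_mx (d D) (col_mx (- (hpsi D - Gxpsi D *m xh)) (- (k D + Kx D *m xh))))
  (fun z => let: (y, u, v) := z in col_mx y (col_mx u v))
  (fun z => (usubmx z, usubmx (dsubmx z), dsubmx (dsubmx z)))).
- move=> [[y u] v].
  rewrite !mul_col_mx !mul_row_col !mul0mx !add0r !addr0 !mulNmx !mul1mx.
  rewrite !lev_colE !levN0E /S1_feas.
  have E : lev (- (B D *m y) + ((Gpsi D)^T *m u + (Kpsi D)^T *m v)) (- b D) <->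
           lev (b D) (B D *m y - (Gpsi D)^T *m u - (Kpsi D)^T *m v).
    by split => h i; have := h i; rewrite !mxE; lra.
  split; first by case=> h1 h2 h3 h4 h5; do !split => //; apply/E.
  by case=> h1 [h2 [h3 [h4 h5]]]; split => //; apply/E.
- move=> [[y u] v]; rewrite /S1_obj !dotv_col !dotvNl (dotvC (hpsi D - _)) (dotvC (k D + _)).
  lra.
- by move=> z /=; rewrite !vsubmxK.
Qed.

Lemma S2'_attain : feasible (S2'_feas D) -> ~ unbounded_max (S2'_feas D) (S2'_obj D xh) ->
  exists z, optimal_max (S2'_feas D) (S2'_obj D xh) z.
Proof.
move=> hf hu.
have [z [Fz hz]] : exists z, optimal_min (S2'_feas D) (fun z => - S2'_obj D xh z) z.
  apply: (@lp_gen _ _ _ _ (m + p) (m + (p + n2))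
    (col_mx (row_mx (-1%:M) 0) (col_mx (row_mx 0 (-1%:M)) (row_mx (B D)^T (Gy D)^T)))
    (col_mx 0 (col_mx 0 (cy D)))
    (col_mx (- (b D - A D *m xh)) (- (hy D - Gxy D *m xh)))
    (fun z => let: (y, u) := z in col_mx y u)
    (fun z => (usubmx z, dsubmx z))).
  - move=> [y u].
    rewrite !mul_col_mx !mul_row_col !mul0mx !add0r !addr0 !mulNmx !mul1mx.
    rewrite !lev_colE !levN0E /S2'_feas.
    by split; [case=> [? ? ?] | case=> [? [? ?]]].
  - by move=> [y u]; rewrite /S2'_obj !dotv_col !dotvNl (dotvC (b D - _)) (dotvC (hy D - _)) opprD.
  - by move=> z /=; rewrite !vsubmxK.
  - by [].
  - move=> h; apply: hu => M; have [x [Fx hx]] := h (- M); exists x; split => //; lra.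
exists z; split => // x Fx; have := hz x Fx; lra.
Qed.

End Enc.

Section Main.
Variables (R : realFieldType) (m n1 n2 p l q r : nat)
  (D : LPdata R m n1 n2 p l q r) (xh : 'cV[R]_n1).

Lemma nonnegZ k a (u : 'cV[R]_k) : 0 <= a -> nonneg u -> nonneg (a *: u).
Proof. by move=> ha hu i; rewrite !mxE mulr_ge0 // (le_trans _ (hu i)) // mxE. Qed.

Lemma nonneg0 k : nonneg (0 : 'cV[R]_k).
Proof. by move=> i; rewrite mxE. Qed.

Lemma nonnegD k (u v : 'cV[R]_k) : nonneg u -> nonneg v -> nonneg (u + v).
Proof. move=> hu hv i; have := hu i; have := hv i; rewrite !mxE; lra. Qed.

Lemma S2'_objZ a psi uy :
  S2'_obj D xh (a *: psi, a *: uy) = a * S2'_obj D xh (psi, uy).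
Proof. by rewrite /S2'_obj !dotvZl mulrDr. Qed.

Lemma S1_objZ a y u v :
  S1_obj D xh (a *: y, a *: u, a *: v) = a * S1_obj D xh (y, u, v).
Proof. rewrite /S1_obj !dotvZl !dotvZr; lra. Qed.

Lemma S1_objD y u v y' u' v' :
  S1_obj D xh (y + y', u + u', v + v') = S1_obj D xh (y, u, v) + S1_obj D xh (y', u', v').
Proof.
rewrite /S1_obj !dotvDr !(dotvC (u + u')) !(dotvC (v + v')) !dotvDr.
rewrite !(dotvC _ u) !(dotvC _ u') !(dotvC _ v) !(dotvC _ v'); lra.
Qed.

Lemma S1_obj0 : S1_obj D xh (0, 0, 0) = 0.
Proof. by rewrite /S1_obj dotv0r !(dotvC 0) !dotv0r !subr0. Qed.

Lemma P_objE psi uy w y u v :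
  P_obj D xh (psi, uy, w, y, u, v) = S2'_obj D xh (psi, uy) - S1_obj D xh (y, u, v).
Proof. rewrite /P_obj /S2'_obj /S1_obj; lra. Qed.

Lemma S2_obj0 O psi uy : S2_obj D xh O (psi, uy, 0) = S2'_obj D xh (psi, uy).
Proof. by case: O => [o|] /=; rewrite ?mulr0 subr0. Qed.

Hypothesis hd : d D = cy D.

Lemma S2'_bound ph uh psi uy w :
  optimal_max (S2'_feas D) (S2'_obj D xh) (ph, uh) ->
  0 <= w -> nonneg psi -> nonneg uy ->
  lev ((B D)^T *m psi + (Gy D)^T *m uy) (w *: d D + cy D) ->
  S2'_obj D xh (psi, uy) <= (w + 1) * S2'_obj D xh (ph, uh).
Proof.
move=> [_ hopt] hw hp hu hc.
have hw1 : 0 < w + 1 by lra.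
have := hopt ((w + 1)^-1 *: psi, (w + 1)^-1 *: uy).
rewrite S2'_objZ -ler_pdivrMl // => -> //.
split; try apply: nonnegZ => //; first (by rewrite invr_ge0 ltW).
  by rewrite invr_ge0 ltW.
move=> i; have := hc i; rewrite -!scalemxAr -scalerDr hd.
move: (_ + (Gy D)^T *m uy) => X; rewrite !mxE ler_pdivrMl // => h; nra.
Qed.

Lemma S1_bound y0 u0 v0 y u v w :
  optimal_min (S1_feas D) (S1_obj D xh) (y0, u0, v0) ->
  0 <= w -> nonneg y -> nonneg u -> nonneg v ->
  lev (w *: b D) (B D *m y - (Gpsi D)^T *m u - (Kpsi D)^T *m v) ->
  lev ((Ks D)^T *m v) (w *: ones R r) ->
  w * S1_obj D xh (y0, u0, v0) <= S1_obj D xh (y, u, v).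
Proof.
move=> [[hy0 hu0 hv0 hb0 hk0] hopt] hw hy hu hv hb hk.
have hw1 : 0 < w + 1 by lra.
have ha : 0 <= (w + 1)^-1 by rewrite invr_ge0 ltW.
have := hopt ((w + 1)^-1 *: (y0 + y), (w + 1)^-1 *: (u0 + u), (w + 1)^-1 *: (v0 + v)).
rewrite S1_objZ S1_objD ler_pdivlMl // => h.
suff : (w + 1) * S1_obj D xh (y0, u0, v0) <= S1_obj D xh (y0, u0, v0) + S1_obj D xh (y, u, v) by lra.
apply: h; split; try (by apply: nonnegZ => //; apply: nonnegD).
  move=> i; have := hb0 i; have := hb i.
  rewrite -!scalemxAr !mulmxDr.
  move: (B D *m y0) (B D *m y) ((Gpsi D)^T *m u0) ((Gpsi D)^T *m u)
        ((Kpsi D)^T *m v0) ((Kpsi D)^T *m v) => Y0 Y G0 G K0 K.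
  rewrite !mxE => h1 h2.
  have -> : (w + 1)^-1 * (Y0 i 0 + Y i 0) - (w + 1)^-1 * (G0 i 0 + G i 0) -
            (w + 1)^-1 * (K0 i 0 + K i 0) =
            (w + 1)^-1 * ((Y0 i 0 + Y i 0) - (G0 i 0 + G i 0) - (K0 i 0 + K i 0)) by ring.
  rewrite ler_pdivlMl // mulrDl mul1r; lra.
move=> i; have := hk0 i; have := hk i.
rewrite -!scalemxAr !mulmxDr.
move: ((Ks D)^T *m v0) ((Ks D)^T *m v) => K0 K.
rewrite !mxE ler_pdivrMl // => h1 h2; lra.
Qed.

Lemma P_bound y0 u0 v0 ph uh :
  optimal_min (S1_feas D) (S1_obj D xh) (y0, u0, v0) ->
  optimal_max (S2'_feas D) (S2'_obj D xh) (ph, uh) ->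
  S2'_obj D xh (ph, uh) <= S1_obj D xh (y0, u0, v0) ->
  forall z, P_feas D z -> P_obj D xh z <= S2'_obj D xh (ph, uh).
Proof.
move=> h1 h2 hle [[[[[psi uy] w] y] u] v] [[hp hu hw hy [hup hv]] [hb hc hk]].
rewrite P_objE.
have e1 := S2'_bound h2 hw hp hu hc.
have e2 := S1_bound h1 hw hy hup hv hb hk.
set O2 := S2'_obj D xh (ph, uh) in e1 hle *.
set o := S1_obj D xh (y0, u0, v0) in e2 hle *.
nra.
Qed.

End Main.

Section Main2.
Variables (R : realFieldType) (m n1 n2 p l q r : nat)
  (D : LPdata R m n1 n2 p l q r) (xh : 'cV[R]_n1).

Lemma P_feas_zero psi uy : S2'_feas D (psi, uy) -> P_feas D (psi, uy, 0, 0, 0, 0).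
Proof.
move=> [hp hu hc]; split; first by split => //; split; apply: nonneg0.
split.
- by move=> i; rewrite scale0r !mulmx0 !subr0 !mxE.
- by rewrite scale0r add0r.
- by move=> i; rewrite scale0r !mulmx0 !mxE.
Qed.

Lemma P_obj_zero psi uy : P_obj D xh (psi, uy, 0, 0, 0, 0) = S2'_obj D xh (psi, uy).
Proof. by rewrite P_objE S1_obj0 subr0. Qed.

Hypothesis hd : d D = cy D.

Lemma P_feas_comb ph uh y0 u0 v0 s :
  S2'_feas D (ph, uh) -> S1_feas D (y0, u0, v0) -> 0 <= s ->
  P_feas D ((1 + s) *: ph, (1 + s) *: uh, s, s *: y0, s *: u0, s *: v0).
Proof.
move=> [hp hu hc] [hy hup hv hb hk] hs.
have hs1 : 0 <= 1 + s by lra.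
split; first by split => //; try split; apply: nonnegZ.
split.
- move=> i; have := hb i; rewrite -!scalemxAr.
  move: (B D *m y0) ((Gpsi D)^T *m u0) ((Kpsi D)^T *m v0) => Y G K.
  rewrite !mxE => h.
  have -> : s * Y i 0 - s * G i 0 - s * K i 0 = s * (Y i 0 - G i 0 - K i 0) by ring.
  by apply: ler_wpM2l.
- move=> i; have := hc i; rewrite -!scalemxAr -scalerDr hd.
  move: (_ + (Gy D)^T *m uh) => X; rewrite !mxE => h.
  have -> : s * cy D i 0 + cy D i 0 = (1 + s) * cy D i 0 by ring.
  by apply: ler_wpM2l.
- move=> i; have := hk i; rewrite -!scalemxAr.
  move: ((Ks D)^T *m v0) => K; rewrite !mxE => h.
  by apply: ler_wpM2l.
Qed.

Lemma P_obj_comb ph uh y0 u0 v0 s :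
  P_obj D xh ((1 + s) *: ph, (1 + s) *: uh, s, s *: y0, s *: u0, s *: v0) =
  (1 + s) * S2'_obj D xh (ph, uh) - s * S1_obj D xh (y0, u0, v0).
Proof. by rewrite P_objE S2'_objZ S1_objZ. Qed.

End Main2.

Unset Implicit Arguments.

Theorem corollary2 (R : realFieldType) (m n1 n2 p l q r : nat)
    (D : LPdata R m n1 n2 p l q r) (xh : 'cV[R]_n1) (O : option R) :
  d D = cy D ->
  feasible (S1_feas D) ->
  feasible (S2'_feas D) ->
  (forall o, O = Some o <-> opt_value_min (S1_feas D) (S1_obj D xh) o) ->
  (unbounded_max (S2'_feas D) (S2'_obj D xh) ->
     unbounded_max (S2_feas D O) (S2_obj D xh O)) /\
  (forall psit uyt, S2'_ray D xh (psit, uyt) -> S2_ray D xh O (psit, uyt, 0)) /\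
  (forall psih uyh, optimal_max (S2'_feas D) (S2'_obj D xh) (psih, uyh) ->
     ext_gt (S2'_obj D xh (psih, uyh)) O ->
     unbounded_max (S2_feas D O) (S2_obj D xh O) /\ S2_ray D xh O (psih, uyh, 1)) /\
  (forall psih uyh, optimal_max (S2'_feas D) (S2'_obj D xh) (psih, uyh) ->
     ~ ext_gt (S2'_obj D xh (psih, uyh)) O ->
     optimal_max (S2_feas D O) (S2_obj D xh O) (psih, uyh, 0) /\
     S2_obj D xh O (psih, uyh, 0) = S2'_obj D xh (psih, uyh)) /\
  (unbounded_max (P_feas D) (P_obj D xh) <->
     [\/ unbounded_min (S1_feas D) (S1_obj D xh),
         unbounded_max (S2'_feas D) (S2'_obj D xh)
       | exists O2, opt_value_max (S2'_feas D) (S2'_obj D xh) O2 /\ ext_gt O2 O]) /\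
  (forall psih uyh, ~ unbounded_min (S1_feas D) (S1_obj D xh) ->
     optimal_max (S2'_feas D) (S2'_obj D xh) (psih, uyh) ->
     ~ ext_gt (S2'_obj D xh (psih, uyh)) O ->
     optimal_max (P_feas D) (P_obj D xh) (psih, uyh, 0, 0, 0, 0) /\
     P_obj D xh (psih, uyh, 0, 0, 0, 0) = S2'_obj D xh (psih, uyh)).
Proof.
move=> hd hf1 hf2 hO.
have [[[y1 u1] v1] hF1] := hf1.
have Hs : forall (M O2 o : R), o < O2 -> exists s, 0 <= s /\ M < (1 + s) * O2 - s * o.
  move=> M O2 o hlt; exists ((`|M - O2| + 1) / (O2 - o)).
  have hp : 0 < O2 - o by lra.
  split; first by apply: divr_ge0; [apply: addr_ge0; [exact: normr_ge0 | exact: ler01] | exact: ltW].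
  have e : (`|M - O2| + 1) / (O2 - o) * (O2 - o) = `|M - O2| + 1.
    by rewrite divfK // gt_eqF.
  have := ler_norm (M - O2); nra.
split.
  move=> hu M; have [[psi uy] [[hp hq hc] hM]] := hu M.
  exists (psi, uy, 0); split; last by rewrite S2_obj0.
  by split; rewrite ?lexx // scale0r add0r.
split.
  move=> psit uyt [hp hu hc hpos]; split; last by rewrite S2_obj0.
  by split; rewrite ?lexx // scale0r.
split.
  move=> ph uh hopt; case: O hO => [o|] hO //= hlt.
  have [[hp hu hc] _] := hopt.
  split.
    move=> M; have [s [hs hM]] := Hs M _ _ hlt.
    have [_ [_ hc' _]] := P_feas_comb hd (And3 hp hu hc) hF1 hs.
    exists ((1 + s) *: ph, (1 + s) *: uh, s); split.
      by split => //; apply: nonnegZ => //; lra.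
    have -> : S2_obj D xh (Some o) ((1 + s) *: ph, (1 + s) *: uh, s) =
              S2'_obj D xh ((1 + s) *: ph, (1 + s) *: uh) - o * s by [].
    rewrite S2'_objZ /S2'_obj /=; lra.
  split; first by split; rewrite ?ler01 // scale1r hd.
  rewrite /S2_obj /=; lra.
split.
  move=> ph uh hopt hng; have [[hp hu hc] hmax] := hopt.
  split; last by rewrite S2_obj0.
  split; first by split; rewrite ?lexx // scale0r add0r.
  move=> [[psi uy] w] [hp' hu' hw hN hc']; rewrite S2_obj0.
  have e := S2'_bound hd hopt hw hp' hu' hc'.
  case: O hO hng hN => [o|] hO hng hN.
    have hle : S2'_obj D xh (ph, uh) <= o by rewrite leNgt; apply/negP.
    have -> : S2_obj D xh (Some o) (psi, uy, w) = S2'_obj D xh (psi, uy) - o * w by [].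
    nra.
  have w0 := hN erefl; subst w.
  have -> : S2_obj D xh None (psi, uy, 0) = S2'_obj D xh (psi, uy) by rewrite /= subr0.
  lra.
split.
  split.
    move=> hPu.
    case: (classic (unbounded_min (S1_feas D) (S1_obj D xh))) => h1; first by apply: Or31.
    case: (classic (unbounded_max (S2'_feas D) (S2'_obj D xh))) => h2; first by apply: Or32.
    apply: Or33.
    have [[[y0 u0] v0] hz0] := S1_attain hf1 h1.
    have [[ph uh] hph] := S2'_attain hf2 h2.
    exists (S2'_obj D xh (ph, uh)); split; first by exists (ph, uh).
    have -> : O = Some (S1_obj D xh (y0, u0, v0)) by apply/hO; exists (y0, u0, v0).
    rewrite /=; case: (ltP (S1_obj D xh (y0, u0, v0)) (S2'_obj D xh (ph, uh))) => // hle.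
    exfalso; have [z [Pz hz]] := hPu (S2'_obj D xh (ph, uh)).
    have := P_bound hd hz0 hph hle Pz; lra.
  case => [h1 | h2 | [O2 [[[ph uh] [hopt hval]] hgt]]].
  - move=> M; have [[psi0 uy0] hF0] := hf2.
    have [[[y u] v] [hz hlt]] := h1 (2 * S2'_obj D xh (psi0, uy0) - M).
    exists ((1 + 1) *: psi0, (1 + 1) *: uy0, 1, 1 *: y, 1 *: u, 1 *: v); split.
      by apply: P_feas_comb => //; apply: ler01.
    rewrite P_obj_comb; lra.
  - move=> M; have [[psi uy] [hF hM]] := h2 M; exists (psi, uy, 0, 0, 0, 0).
    by split; [exact: P_feas_zero | rewrite P_obj_zero].
  - case: O hO hgt => [o|] hO //= hgt.
    have [[[y0 u0] v0] [hz0 hz0v]] := (proj1 (hO o)) erefl.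
    move=> M; rewrite -hval in hgt.
    have [s [hs hM]] := Hs M _ _ hgt.
    exists ((1 + s) *: ph, (1 + s) *: uh, s, s *: y0, s *: u0, s *: v0); split.
      by apply: P_feas_comb => //; [exact: hopt.1 | exact: hz0.1].
    by rewrite P_obj_comb hz0v.
move=> ph uh h1 hopt hng.
have [[[y0 u0] v0] hz0] := S1_attain hf1 h1.
have hOo : O = Some (S1_obj D xh (y0, u0, v0)) by apply/hO; exists (y0, u0, v0).
rewrite hOo /= in hng.
have hle : S2'_obj D xh (ph, uh) <= S1_obj D xh (y0, u0, v0) by rewrite leNgt; apply/negP.
split; last exact: P_obj_zero.
split; first exact: P_feas_zero hopt.1.
move=> z Pz; rewrite P_obj_zero; exact: (@P_bound R m n1 n2 p l q r D xh hd y0 u0 v0 ph uh hz0 hopt hle z Pz).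
Qed.
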